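(* Let $(f,g),(f',g')\in\Theta$ with logits $u,u'$, fix $x\in\mathcal X$, and suppose $\min_{y\in\mathcal Y}p_{f,g}(y\mid x)\ge\tau$ for some $0<\tau\le1/3$. Writing $K=\mathrm{KL}(p_{f,g}(\cdot\mid x)\|p_{f',g'}(\cdot\mid x))$, one has $$\|u(x)-u'(x)\|^2\le\frac{12\log(\tau)^2}{\tau}K+\frac{9}{\tau^2}K^2.$$ If in addition $\min_{y\in\mathcal Y}p_{f',g'}(y\mid x)\ge\tau$, then $\|u(x)-u'(x)\|^2\le\frac{4\log(\tau)^2}{\tau}K$.
   Context: Model class $\Theta$: pairs $(f,g)$, $f:\mathcal X\to\mathbb R^m$, $g:\mathcal Y\to\mathbb R^m$, $\mathcal Y=\{y_1,\dots,y_k\}$, with the centering convention $\sum_y g(y)=0$ (same for $g'$), inducing $p_{f,g}(y\mid x)=\exp(f(x)^\top g(y))/\sum_{y'}\exp(f(x)^\top g(y'))$. Logits $u(x)_i=f(x)^\top g(y_i)$, $u'(x)_i=f'(x)^\top g'(y_i)$. *)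

(* Defs.v *)
From HB Require Import structures.
From mathcomp Require Import all_boot all_order all_algebra.
From mathcomp Require Import all_classical all_reals all_analysis.
Set Implicit Arguments. Unset Strict Implicit. Unset Printing Implicit Defensive.
Import Order.TTheory GRing.Theory Num.Theory.
Local Open Scope ring_scope.

(* Labels Y = {y_1,...,y_k} are indexed by 'I_k; embeddings live in R^m
   (row vectors). *)

Definition centered (R : realType) (m k : nat) (g : 'I_k -> 'rV[R]_m) : Prop :=
  \sum_(i < k) g i = 0.

Definition logit (R : realType) (X : Type) (m k : nat)
  (f : X -> 'rV[R]_m) (g : 'I_k -> 'rV[R]_m) (x : X) (i : 'I_k) : R :=
  \sum_(j < m) f x 0 j * g i 0 j.

Definition pmodel (R : realType) (X : Type) (m k : nat)
  (f : X -> 'rV[R]_m) (g : 'I_k -> 'rV[R]_m) (x : X) (i : 'I_k) : R :=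
  expR (logit f g x i) / \sum_(j < k) expR (logit f g x j).

Definition KL (R : realType) (k : nat) (p q : 'I_k -> R) : R :=
  \sum_(i < k) p i * ln (p i / q i).

Definition sqdist (R : realType) (k : nat) (u v : 'I_k -> R) : R :=
  \sum_(i < k) (u i - v i) ^+ 2.

(* Main.v *)
Require Import Defs.
From HB Require Import structures.
From mathcomp Require Import all_boot all_order all_algebra.
From mathcomp Require Import all_classical all_reals all_analysis.
Import Order.TTheory GRing.Theory Num.Theory.
Local Open Scope ring_scope.

From mathcomp Require Import ring lra.

Section S.

Variable R : realType.
Implicit Types r L tau : R.

Definition phi r : R := expR (- r) - 1 + r.

Lemma phi_ge0 r : 0 <= phi r.
Proof. have := expR_ge1Dx (- r); rewrite /phi; lra. Qed.

Lemma phi_small r : r <= 2 -> r ^+ 2 <= 4 * phi r.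
Proof.
move=> hr; rewrite /phi.
have -> : - r = - (r / 2) + - (r / 2) by field.
rewrite expRD.
have h := expR_ge1Dx (- (r / 2)).
have h0 : 0 <= 1 + - (r / 2) by lra.
have : (1 + - (r/2)) * (1 + - (r/2)) <= expR (- (r / 2)) * expR (- (r / 2)).
  by apply: ler_pM.
nra.
Qed.

Lemma phi_big r : 2 <= r -> r - 1 <= phi r.
Proof. have := expR_gt0 (- r); rewrite /phi; lra. Qed.

Lemma phiA r : r ^+ 2 <= 4 * phi r + 9 * phi r ^+ 2.
Proof.
have h0 := phi_ge0 r.
case: (lerP r 2) => hr.
  have := phi_small r hr; nra.
have := phi_big r (ltW hr) => h1.
have h3 : r <= 3 * phi r by lra.
have h4 : r * r <= (3 * phi r) * (3 * phi r) by apply: ler_pM => //; lra.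
nra.
Qed.

Lemma phiB r L : 1 <= L -> r <= L -> r ^+ 2 <= 4 * L ^+ 2 * phi r.
Proof.
move=> hL hrL; have h0 := phi_ge0 r.
case: (lerP r 2) => hr.
  have := phi_small r hr => h1.
  have hL2 : 1 <= L ^+ 2 by rewrite expr2; nra.
  have : 0 <= (L ^+ 2 - 1) * phi r by apply: mulr_ge0; lra.
  nra.
have := phi_big r (ltW hr) => h1.
have h2 : r * r <= L * r by apply: ler_wpM2r; lra.
have h3 : L * r <= L * L * r by apply: ler_wpM2r; nra.
have h4 : 0 <= L * L * (phi r - r / 2) by apply: mulr_ge0; nra.
rewrite expr2; nra.
Qed.

Lemma L_ge1 tau : 0 < tau -> tau <= 1 / 3 -> 1 <= - ln tau.
Proof.
move=> t0 t3.
have e : expR (-1) = expR (- (1/6)) ^+ 6 :> R.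
  by rewrite -expRM_natl; congr expR; field.
have h := expR_ge1Dx (- (1/6) : R).
have h0 : 0 <= 1 + - (1/6) :> R by lra.
have : (1 + - (1/6)) ^+ 6 <= expR (- (1/6)) ^+ 6 :> R by apply: lerXn2r; rewrite ?nnegrE // ?expR_ge0.
rewrite -e => h6.
have : tau <= expR (-1).
  apply: le_trans t3 _; apply: le_trans h6; rewrite !exprS expr0; lra.
rewrite -ler_ln ?posrE ?expR_gt0 // expRK; lra.
Qed.

Set Implicit Arguments. Unset Strict Implicit.
Lemma variance k (d : 'I_k -> R) c : \sum_(i < k) d i = 0 ->
  \sum_(i < k) d i ^+ 2 <= \sum_(i < k) (d i - c) ^+ 2.
Proof.
move=> hd; rewrite -subr_ge0 -sumrB.
have -> : \sum_(i < k) ((d i - c) ^+ 2 - d i ^+ 2)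
   = \sum_(i < k) (c ^+ 2) - 2 * c * \sum_(i < k) d i.
  rewrite mulr_sumr -sumrB; apply: eq_bigr => i _; ring.
rewrite hd mulr0 subr0; apply: sumr_ge0 => i _; exact: sqr_ge0.
Qed.

Lemma sumsq k (a : 'I_k -> R) : (forall i, 0 <= a i) ->
  \sum_(i < k) a i ^+ 2 <= (\sum_(i < k) a i) ^+ 2.
Proof.
move=> ha; rewrite expr2 mulr_suml; apply: ler_sum => i _.
rewrite expr2; apply: ler_wpM2l => //.
rewrite (bigD1 i) //= lerDl; apply: sumr_ge0 => j _; exact: ha.
Qed.

Definition softmax k (u : 'I_k -> R) (i : 'I_k) : R :=
  expR (u i) / \sum_(j < k) expR (u j).

Lemma Z_ge k (u : 'I_k -> R) i : expR (u i) <= \sum_(j < k) expR (u j).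
Proof.
rewrite (bigD1 i) //= lerDl; apply: sumr_ge0 => j _; exact: expR_ge0.
Qed.

Lemma softmax_pos k (u : 'I_k -> R) i : 0 < softmax u i.
Proof.
rewrite /softmax divr_gt0 ?expR_gt0 //.
exact: lt_le_trans (expR_gt0 _) (Z_ge u i).
Qed.

Lemma softmax_le1 k (u : 'I_k -> R) i : softmax u i <= 1.
Proof.
have Z0 := lt_le_trans (expR_gt0 _) (Z_ge u i).
by rewrite /softmax ler_pdivrMr // mul1r Z_ge.
Qed.

Lemma softmax_sum k (u : 'I_k -> R) : (0 < k)%N -> \sum_(i < k) softmax u i = 1.
Proof.
move=> k0; have Z0 := lt_le_trans (expR_gt0 _) (Z_ge u (Ordinal k0)).
by rewrite /softmax -mulr_suml mulfV // gt_eqF.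
Qed.

Lemma ln_softmax k (u : 'I_k -> R) i :
  ln (softmax u i) = u i - ln (\sum_(j < k) expR (u j)).
Proof.
have Z0 := lt_le_trans (expR_gt0 _) (Z_ge u i).
by rewrite /softmax ln_div ?posrE ?expR_gt0 // expRK.
Qed.

Lemma core k (u u' : 'I_k -> R) tau
  (hu : \sum_(i < k) u i = 0) (hu' : \sum_(i < k) u' i = 0)
  (htau0 : 0 < tau) (htau1 : tau <= 1 / 3)
  (hmin : forall y : 'I_k, tau <= softmax u y) :
  let K := KL (softmax u) (softmax u') in
  sqdist u u'
    <= 12 * (ln tau) ^+ 2 / tau * K + 9 / tau ^+ 2 * K ^+ 2
  /\ ((forall y : 'I_k, tau <= softmax u' y) ->
      sqdist u u' <= 4 * (ln tau) ^+ 2 / tau * K).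
Proof.
move=> K.
have [k0|kpos] := posnP k.
  subst k; rewrite /K /KL /sqdist !big_ord0 expr0n /= !mulr0 addr0; split => //.
set p := softmax u; set q := softmax u'.
set r := fun i => ln (p i / q i).
have hp i : 0 < p i by exact: softmax_pos.
have hq i : 0 < q i by exact: softmax_pos.
have hr i : r i = (u i - u' i) - (ln (\sum_(j < k) expR (u j)) - ln (\sum_(j < k) expR (u' j))).
  rewrite /r ln_div ?posrE // /p /q !ln_softmax; ring.
have hexp i : p i * expR (- r i) = q i.
  rewrite /r ln_div ?posrE // opprB expRB !lnK ?posrE //.
  by rewrite mulrC divfK // gt_eqF.
have hK : K = \sum_(i < k) p i * phi (r i).
  have -> : \sum_(i < k) p i * phi (r i) =
     \sum_(i < k) q i - \sum_(i < k) p i + \sum_(i < k) p i * r i.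
    rewrite -sumrB -big_split /=; apply: eq_bigr => i _.
    by rewrite /phi -(hexp i); ring.
  by rewrite /p /q !softmax_sum // subrr add0r.
set S := \sum_(i < k) phi (r i).
have hS0 : 0 <= S by apply: sumr_ge0 => i _; exact: phi_ge0.
have hS : tau * S <= K.
  rewrite hK /S mulr_sumr; apply: ler_sum => i _.
  by apply: ler_wpM2r; [exact: phi_ge0 | exact: hmin].
have hvar : sqdist u u' <= \sum_(i < k) r i ^+ 2.
  rewrite (eq_bigr (fun i => ((u i - u' i) - (ln (\sum_(j < k) expR (u j)) - ln (\sum_(j < k) expR (u' j)))) ^+ 2)); last by move=> i _; rewrite hr.
  apply: variance; rewrite sumrB hu hu' subrr //.
have hL := L_ge1 tau htau0 htau1.
set L := - ln tau in hL.
have hL2 : ln tau ^+ 2 = L ^+ 2 by rewrite /L sqrrN.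
have hSK : S <= K / tau by rewrite ler_pdivlMr // mulrC.
split.
  apply: le_trans hvar _.
  apply: (@le_trans _ _ (\sum_(i < k) (4 * phi (r i) + 9 * phi (r i) ^+ 2))).
    by apply: ler_sum => i _; exact: phiA.
  rewrite big_split /= -!mulr_sumr.
  have h9 := sumsq (fun i => phi_ge0 (r i)).
  rewrite -/S in h9. rewrite -/S.
  set T := \sum_(i < k) phi (r i) ^+ 2 in h9 *.
  have -> : 12 * ln tau ^+ 2 / tau * K + 9 / tau ^+ 2 * K ^+ 2
     = 12 * L ^+ 2 * (K / tau) + 9 * (K / tau) ^+ 2.
    rewrite hL2; field; exact: lt0r_neq0.
  have hA : 0 <= K / tau by lra.
  have h1 : S * S <= (K / tau) * (K / tau) by apply: ler_pM.
  rewrite !expr2 in h9 h1 *.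
  have h2 : 0 <= (L * L - 1) * S by apply: mulr_ge0; nra.
  have h3 : 0 <= L * L * (K / tau - S) by apply: mulr_ge0; nra.
  lra.
move=> hmin'.
apply: le_trans hvar _.
apply: (@le_trans _ _ (\sum_(i < k) (4 * L ^+ 2 * phi (r i)))).
  apply: ler_sum => i _; apply: phiB => //.
  have hpq : 0 < p i / q i by apply: divr_gt0.
  rewrite /r /L -lnV ?posrE // ler_ln ?posrE ?invr_gt0 //.
  rewrite ler_pdivrMr //; apply: le_trans (softmax_le1 u i) _.
  by rewrite mulrC ler_pdivlMr // mul1r hmin'.
rewrite -mulr_sumr -/S.
have -> : 4 * ln tau ^+ 2 / tau * K = 4 * L ^+ 2 * (K / tau).
  rewrite hL2; field; exact: lt0r_neq0.
apply: ler_wpM2l => //; apply: mulr_ge0 => //; exact: sqr_ge0.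
Qed.
End S.

Theorem mainTheorem18 (R : realType) (X : Type) (m k : nat)
  (f f' : X -> 'rV[R]_m) (g g' : 'I_k -> 'rV[R]_m)
  (hg : centered g) (hg' : centered g') (x : X) (tau : R)
  (htau0 : 0 < tau) (htau1 : tau <= 1 / 3)
  (hmin : forall y : 'I_k, tau <= pmodel f g x y) :
  let K := KL (pmodel f g x) (pmodel f' g' x) in
  sqdist (logit f g x) (logit f' g' x)
    <= 12 * (ln tau) ^+ 2 / tau * K + 9 / tau ^+ 2 * K ^+ 2
  /\ ((forall y : 'I_k, tau <= pmodel f' g' x y) ->
      sqdist (logit f g x) (logit f' g' x) <= 4 * (ln tau) ^+ 2 / tau * K).
Proof.
have hc : forall (h : 'I_k -> 'rV[R]_m), centered h -> \sum_(i < k) logit f' h x i = 0.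
  move=> h hh; rewrite /logit exchange_big /=.
  apply: big1 => j _; rewrite -mulr_sumr.
  have : (\sum_(i < k) h i) 0 j = 0 by rewrite hh mxE.
  by rewrite summxE => ->; rewrite mulr0.
have hc2 : \sum_(i < k) logit f g x i = 0.
  rewrite /logit exchange_big /=.
  apply: big1 => j _; rewrite -mulr_sumr.
  have : (\sum_(i < k) g i) 0 j = 0 by rewrite hg mxE.
  by rewrite summxE => ->; rewrite mulr0.
exact: (core hc2 (hc g' hg') htau0 htau1 hmin).
Qed.
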